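(* $$\sum_{n=0}^\infty \frac{\binom{2n}{n}}{(2n+1)(n+1)^2\, 2^{2n}} = 2\pi + 4\log 2 - 8.$$
   Context: $\binom{2n}{n}$ is the central binomial coefficient; $\log$ is the natural logarithm. *)

(* Defs.v *)
From Stdlib Require Import Reals.
From Coquelicot Require Import Coquelicot.
Open Scope R_scope.

Definition term7 (n : nat) : R :=
  Binomial.C (2 * n) n / ((2 * INR n + 1) * (INR n + 1) ^ 2 * 2 ^ (2 * n)).

(* Main.v *)
Require Import Defs.
From Stdlib Require Import Reals Lra Lia Psatz Factorial.
From Coquelicot Require Import Coquelicot.
Open Scope R_scope.

Definition c (n : nat) : R := Binomial.C (2 * n) n / 2 ^ (2 * n).

Lemma C2 n : Binomial.C (2 * n) n = INR (fact (2 * n)) / (INR (fact n) * INR (fact n)).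
Proof. unfold Binomial.C. replace (2 * n - n)%nat with n by lia. reflexivity. Qed.

Lemma c0 : c 0 = 1.
Proof. unfold c. rewrite C2. simpl. field. Qed.

Lemma cS n : c (S n) = c n * (2 * INR n + 1) / (2 * INR n + 2).
Proof.
  unfold c. rewrite !C2.
  replace (2 * S n)%nat with (S (S (2 * n))) by lia.
  rewrite (fact_simpl (S (2*n))), (fact_simpl (2*n)), (fact_simpl n).
  rewrite !mult_INR, !S_INR, mult_INR. simpl INR.
  replace (2 ^ (S (S (2 * n)))) with (4 * 2 ^ (2 * n)) by (simpl; ring).
  assert (H1 := INR_fact_neq_0 n). assert (H2 := INR_fact_neq_0 (2*n)).
  assert (H3 : 2 ^ (2 * n) <> 0) by (apply pow_nonzero; lra).
  assert (H4 := pos_INR n).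
  field. repeat split; try lra; auto.
Qed.

Lemma c_pos n : 0 < c n.
Proof.
  induction n. rewrite c0; lra.
  rewrite cS. assert (H4 := pos_INR n).
  apply Rdiv_lt_0_compat; nra.
Qed.

Lemma c_le1 n : c n <= 1.
Proof.
  induction n. rewrite c0; lra.
  rewrite cS. assert (H4 := pos_INR n). assert (H5 := c_pos n).
  apply Rle_trans with (c n); auto.
  apply Rmult_le_reg_r with (2 * INR n + 2). lra.
  unfold Rdiv. rewrite Rmult_assoc, Rinv_l by lra. nra.
Qed.

Lemma pow_le1' x n : 0 <= x <= 1 -> x ^ n <= 1.
Proof. intros H. rewrite <- (pow1 n). apply pow_incr. lra. Qed.

Lemma pow_decr x k n : 0 <= x <= 1 -> (k <= n)%nat -> x ^ n <= x ^ k.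
Proof.
  intros H Hk. replace n with (k + (n - k))%nat by lia. rewrite pow_add.
  assert (0 <= x ^ k) by (apply pow_le; lra).
  assert (x ^ (n - k) <= 1) by (apply pow_le1'; lra).
  assert (0 <= x ^ (n - k)) by (apply pow_le; lra). nra.
Qed.

Lemma sum_f_R0_le (a : nat -> R) y n : (forall k, 0 <= a k) -> 0 <= y < 1 ->
  sum_f_R0 (fun k => a k * y ^ k) n <= sum_f_R0 a n.
Proof.
  intros Ha Hy. apply sum_Rle. intros k _.
  assert (y ^ k <= 1) by (apply pow_le1'; lra). specialize (Ha k). nra.
Qed.

Lemma radius_ge (a : nat -> R) : (forall n, Rabs (a n) <= 1) ->
  forall x, Rabs x < 1 -> Rbar_lt (Rabs x) (CV_radius a).
Proof.
  intros Ha x Hx.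
  destruct (CV_radius_bounded a) as [Hub _].
  set (r := (Rabs x + 1) / 2).
  assert (Hr : Rbar_le r (CV_radius a)).
  { apply Hub. exists 1. intros n.
    rewrite Rabs_mult, <- RPow_abs.
    assert (0 <= Rabs r ^ n <= 1).
    { split. apply pow_le, Rabs_pos. apply pow_le1'. split. apply Rabs_pos.
      unfold r. rewrite Rabs_pos_eq. assert (H0 := Rabs_pos x). lra.
      assert (H0 := Rabs_pos x). lra. }
    specialize (Ha n). assert (H1 := Rabs_pos (a n)). nra. }
  destruct (CV_radius a) as [l| |]; simpl in *; auto.
  unfold r in Hr. lra.
Qed.

Lemma pseries_Un_cv (a : nat -> R) y l : is_pseries a y l ->
  Un_cv (fun n => sum_f_R0 (fun k => a k * y ^ k) n) l.
Proof.
  intros H. apply is_series_Reals in H.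
  intros eps Heps. destruct (H eps Heps) as [N HN]. exists N. intros n Hn.
  specialize (HN n Hn).
  replace (sum_f_R0 (fun k => a k * y ^ k) n) with (sum_f_R0 (fun k => scal (pow_n y k) (a k)) n). exact HN.
  apply sum_eq. intros i _. rewrite pow_n_pow. unfold scal; simpl. unfold mult; simpl. ring.
Qed.

Lemma bernoulli (y : R) (n : nat) : 0 <= y <= 1 -> 1 - INR n * (1 - y) <= y ^ n.
Proof.
  intros Hy. induction n. simpl. lra.
  rewrite S_INR. change (y ^ S n) with (y * y ^ n).
  assert (0 <= y ^ n) by (apply pow_le; lra).
  assert (H1 := pos_INR n).
  assert (H2 : y * (1 - INR n * (1 - y)) <= y * y ^ n) by (apply Rmult_le_compat_l; lra).
  assert (H3 : 0 <= INR n * ((1 - y) * (1 - y))) by (apply Rmult_le_pos; nra).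
  nra.
Qed.

Lemma abel_pos (a : nat -> R) (L : R) :
  (forall n, 0 <= a n) -> (forall n, a n <= 1) ->
  (forall y, 0 <= y < 1 -> y * PSeries a y <= L) ->
  (forall eps, 0 < eps -> exists y, 0 <= y < 1 /\ L - eps < PSeries a y) ->
  is_series a L.
Proof.
  intros Hpos Hle1 Hup Hlow.
  assert (Hab : forall n, Rabs (a n) <= 1).
  { intros n. rewrite Rabs_pos_eq; auto. }
  assert (Hps : forall y, 0 <= y < 1 -> is_pseries a y (PSeries a y)).
  { intros y Hy. apply PSeries_correct, CV_radius_inside, radius_ge; auto.
    rewrite Rabs_pos_eq; lra. }
  assert (Hpart : forall y n, 0 <= y < 1 ->
            sum_f_R0 (fun k => a k * y ^ k) n <= PSeries a y).
  { intros y n Hy. apply growing_ineq.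
    - intros m. simpl. assert (0 <= a (S m) * (y * y ^ m)).
      { apply Rmult_le_pos; auto. apply (pow_le y (S m)); lra. } lra.
    - apply pseries_Un_cv, Hps; auto. }
  assert (HS : forall n, sum_f_R0 a n <= L).
  { intros n.
    assert (Hk : forall y, 0 <= y < 1 -> y ^ (S n) * sum_f_R0 a n <= L).
    { intros y Hy. apply Rle_trans with (y * PSeries a y); [|apply Hup; auto].
      apply Rle_trans with (y * sum_f_R0 (fun k => a k * y ^ k) n);
        [| apply Rmult_le_compat_l; [lra| apply Hpart; auto]].
      rewrite !scal_sum. apply sum_Rle. intros k Hk.
      assert (H1 : y ^ (S n) <= y ^ (S k)) by (apply pow_decr; [lra|lia]).
      simpl in H1. specialize (Hpos k). simpl. nra. }
    set (Sm := sum_f_R0 a n) in *.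
    assert (HS0 : 0 <= Sm).
    { unfold Sm. clear - Hpos. induction n. simpl. apply Hpos. simpl. specialize (Hpos (S n)). lra. }
    destruct (Rle_dec Sm L) as [h|h]; auto. exfalso. apply Rnot_le_lt in h.
    assert (HL0 : 0 <= L) by (assert (H0 := Hup 0 ltac:(lra)); lra).
    assert (HN := pos_INR (S n)).
    set (d := Rmin (1/2) ((Sm - L) / (2 * Sm * (INR (S n) + 1)))).
    assert (Hd0 : 0 < d).
    { unfold d. apply Rmin_glb_lt. lra. apply Rdiv_lt_0_compat; nra. }
    assert (Hd1 : d <= 1/2) by apply Rmin_l.
    assert (Hd2 : d * (2 * Sm * (INR (S n) + 1)) <= Sm - L).
    { assert (d <= (Sm - L) / (2 * Sm * (INR (S n) + 1))) by apply Rmin_r.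
      apply Rmult_le_compat_r with (r := 2 * Sm * (INR (S n) + 1)) in H. 2: nra.
      unfold Rdiv in H. rewrite (Rmult_assoc (Sm - L)), Rinv_l in H by nra. lra. }
    specialize (Hk (1 - d) ltac:(lra)).
    assert (Hb := bernoulli (1 - d) (S n) ltac:(lra)).
    nra. }
  destruct (growing_cv (sum_f_R0 a)) as [l Hl].
  { intros n. simpl. specialize (Hpos (S n)). lra. }
  { exists L. intros x [n ->]. apply HS. }
  assert (HlL : l <= L).
  { apply is_lim_seq_Reals in Hl.
    assert (H := is_lim_seq_le (sum_f_R0 a) (fun _ => L) l L HS Hl (is_lim_seq_const L)).
    simpl in H. exact H. }
  assert (HlL2 : L <= l).
  { apply Rnot_lt_le. intros Hlt.
    destruct (Hlow (L - l) ltac:(lra)) as [y [Hy Hy2]].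
    assert (PSeries a y <= l).
    { assert (H1 := pseries_Un_cv a y _ (Hps y Hy)). apply is_lim_seq_Reals in H1.
      apply is_lim_seq_Reals in Hl.
      assert (H := is_lim_seq_le _ _ _ _ (fun n => sum_f_R0_le a y n Hpos Hy) H1 Hl).
      simpl in H. exact H. }
    lra. }
  apply is_series_Reals. replace L with l by lra. exact Hl.
Qed.

Lemma c_abs n : Rabs (c n) <= 1.
Proof. rewrite Rabs_pos_eq. apply c_le1. left; apply c_pos. Qed.

Lemma radc y : Rabs y < 1 -> Rbar_lt (Rabs y) (CV_radius c).
Proof. apply radius_ge, c_abs. Qed.

Lemma exc y : Rabs y < 1 -> ex_pseries c y.
Proof. intros; apply CV_radius_inside, radc; auto. Qed.

Lemma exdc y : Rabs y < 1 -> ex_pseries (PS_derive c) y.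
Proof. intros; apply CV_radius_inside. rewrite CV_radius_derive. apply radc; auto. Qed.

Lemma c_ode y : Rabs y < 1 ->
  PSeries c y = 2 * PSeries (PS_derive c) y - 2 * (y * PSeries (PS_derive c) y).
Proof.
  intros Hy. rewrite <- PSeries_incr_1.
  rewrite <- Rmult_minus_distr_l.
  rewrite <- PSeries_minus by (try apply ex_pseries_incr_1; apply exdc; auto).
  rewrite <- PSeries_scal. apply PSeries_ext. intros n.
  unfold PS_scal, PS_minus, PS_derive, PS_incr_1.
  destruct n.
  - rewrite cS, c0. unfold scal, plus, opp, zero; simpl. unfold mult, plus, opp, zero; simpl. lra.
  - rewrite (cS (S n)), !S_INR. assert (H:= pos_INR n). set (m := INR n) in *.
    unfold scal, plus, opp, zero; simpl. unfold mult, plus, opp, zero; simpl.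
    field. lra.
Qed.

Lemma sqrt_deriv t : t < 1 -> is_derive (fun t => sqrt (1 - t)) t (- / (2 * sqrt (1 - t))).
Proof.
  intros H. auto_derive. lra.
  assert (0 < sqrt (1 - t)) by (apply sqrt_lt_R0; lra).
  replace (1 + - t) with (1 - t) by ring. field. lra.
Qed.

Lemma zero_derive_const (f : R -> R) y :
  0 < y -> (forall t, 0 <= t <= y -> is_derive f t 0) -> f y = f 0.
Proof.
  intros Hy H. symmetry. apply (eq_is_derive f 0 y); auto.
Qed.

Lemma B_closed y : 0 <= y < 1 -> PSeries c y = / sqrt (1 - y).
Proof.
  intros Hy.
  assert (Hs : 0 < sqrt (1 - y)) by (apply sqrt_lt_R0; lra).
  assert (Hss := sqrt_sqrt (1 - y) ltac:(lra)).
  assert (E : PSeries c y * sqrt (1 - y) = 1).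
  { destruct (Req_dec y 0) as [->|Hy0].
    - rewrite PSeries_0, c0, Rminus_0_r, sqrt_1. ring.
    - set (f := fun t => PSeries c t * sqrt (1 - t)).
      change (f y = 1).
      rewrite (zero_derive_const f y); [unfold f; rewrite PSeries_0, c0, Rminus_0_r, sqrt_1; ring|lra|].
      intros t Ht.
      assert (Ht1 : Rabs t < 1) by (rewrite Rabs_pos_eq; lra).
      assert (Hst : 0 < sqrt (1 - t)) by (apply sqrt_lt_R0; lra).
      assert (Hsst := sqrt_sqrt (1 - t) ltac:(lra)).
      assert (D := is_derive_mult (PSeries c) (fun t => sqrt (1 - t)) t _ _
                     (is_derive_PSeries c t (radc t Ht1)) (sqrt_deriv t ltac:(lra))
                     (fun a b => Rmult_comm a b)).
      unfold f. replace 0 with (plus (mult (PSeries (PS_derive c) t) (sqrt (1 - t)))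
                                     (mult (PSeries c t) (- / (2 * sqrt (1 - t))))).
      exact D.
      unfold plus, mult; simpl.
      rewrite (c_ode t Ht1).
      set (P := PSeries (PS_derive c) t) in *. set (s := sqrt (1 - t)) in *.
      assert (HH : P * s + (2 * P - 2 * (t * P)) * (- / (2 * s)) = P * (s * s - (1 - t)) / s)
        by (field; lra).
      rewrite HH, Hsst. unfold Rdiv. ring. }
  apply (Rmult_eq_reg_r (sqrt (1 - y))). rewrite E. field. lra. lra.
Qed.

Lemma ident (a : nat -> R) (F F' : R -> R) :
  (forall n, Rabs (a n) <= 1) ->
  (forall t, 0 <= t < 1 -> is_derive F t (F' t)) ->
  (forall t, 0 <= t < 1 -> PSeries (PS_derive a) t = F' t) ->
  a 0%nat = F 0 ->
  forall y, 0 <= y < 1 -> PSeries a y = F y.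
Proof.
  intros Ha HF HF' H0 y Hy.
  apply Rminus_diag_uniq.
  destruct (Req_dec y 0) as [->|Hy0].
  { rewrite PSeries_0, H0. ring. }
  set (g := fun t => PSeries a t - F t).
  change (g y = 0).
  rewrite (zero_derive_const g y); [unfold g; rewrite PSeries_0, H0; ring|lra|].
  intros t Ht.
  assert (Ht1 : Rabs t < 1) by (rewrite Rabs_pos_eq; lra).
  assert (D := is_derive_minus (PSeries a) F t _ _
                 (is_derive_PSeries a t (radius_ge a Ha t Ht1)) (HF t ltac:(lra))).
  unfold g. replace 0 with (minus (PSeries (PS_derive a) t) (F' t)).
  exact D.
  rewrite HF' by lra. unfold minus, plus, opp; simpl. ring.
Qed.

Definition k2 (n : nat) : R := match n with 0%nat => 0 | S m => c m / (INR m + 1) end.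

Lemma k2_pos n : 0 <= k2 n.
Proof.
  destruct n; simpl. lra. assert (H := c_pos n). assert (H1 := pos_INR n).
  apply Rlt_le, Rdiv_lt_0_compat; lra.
Qed.

Lemma k2_le1 n : k2 n <= 1.
Proof.
  destruct n; unfold k2. lra. assert (H := c_le1 n). assert (H0 := c_pos n). assert (H1 := pos_INR n).
  apply Rmult_le_reg_r with (INR n + 1). lra.
  unfold Rdiv. rewrite Rmult_assoc, Rinv_l by lra. nra.
Qed.

Lemma k2_closed y : 0 <= y < 1 -> PSeries k2 y = 2 - 2 * sqrt (1 - y).
Proof.
  apply (ident k2 (fun t => 2 - 2 * sqrt (1 - t)) (fun t => / sqrt (1 - t))).
  - intros n. rewrite Rabs_pos_eq. apply k2_le1. apply k2_pos.
  - intros t Ht. auto_derive. lra.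
    assert (0 < sqrt (1 - t)) by (apply sqrt_lt_R0; lra).
    replace (1 + - t) with (1 - t) by ring. field. lra.
  - intros t Ht. rewrite <- B_closed by lra. apply PSeries_ext. intros n.
    unfold PS_derive, k2. rewrite S_INR. field. assert (H1 := pos_INR n). lra.
  - simpl. rewrite Rminus_0_r, sqrt_1. ring.
Qed.

Lemma S2 : is_series (fun n => c n / (INR n + 1)) 2.
Proof.
  assert (H : is_series k2 2).
  { apply abel_pos. apply k2_pos. apply k2_le1.
    - intros y Hy. rewrite k2_closed by lra.
      assert (0 <= sqrt (1 - y)) by apply sqrt_pos.
      assert (sqrt (1 - y) * sqrt (1 - y) = 1 - y) by (apply sqrt_sqrt; lra).
      nra.
    - intros eps Heps. set (d := Rmin (1/2) (eps / 4)).
      assert (Hd0 : 0 < d) by (apply Rmin_glb_lt; lra).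
      assert (Hd1 : d <= 1/2) by apply Rmin_l. assert (Hd2 : d <= eps / 4) by apply Rmin_r.
      exists (1 - d * d). split. nra.
      rewrite k2_closed by nra. replace (1 - (1 - d * d)) with (d * d) by ring.
      rewrite sqrt_square by lra. lra. }
  assert (H2 : is_series (fun k => k2 (S k)) 2).
  { apply is_series_incr_1. unfold plus; simpl. rewrite Rplus_0_r. exact H. }
  apply (is_series_ext _ _ _ (fun n => eq_refl) H2).
Qed.

Definition k3 (n : nat) : R := match n with 0%nat => 0 | S m => c (S m) / (INR m + 1) end.

Lemma k3_pos n : 0 <= k3 n.
Proof.
  destruct n; simpl. lra. assert (H := c_pos (S n)). assert (H1 := pos_INR n).
  apply Rlt_le, Rdiv_lt_0_compat; lra.
Qed.

Lemma k3_le1 n : k3 n <= 1.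
Proof.
  destruct n; unfold k3. lra. assert (H := c_le1 (S n)). assert (H0 := c_pos (S n)). assert (H1 := pos_INR n).
  apply Rmult_le_reg_r with (INR n + 1). lra.
  unfold Rdiv. rewrite Rmult_assoc, Rinv_l by lra. nra.
Qed.

Lemma D3 t : 0 <= t < 1 ->
  PSeries (fun n => c (S n)) t = / (sqrt (1 - t) * (1 + sqrt (1 - t))).
Proof.
  intros Ht.
  assert (Hs : 0 < sqrt (1 - t)) by (apply sqrt_lt_R0; lra).
  assert (Hss := sqrt_sqrt (1 - t) ltac:(lra)).
  destruct (Req_dec t 0) as [->|Ht0].
  { rewrite PSeries_0, cS, c0, Rminus_0_r, sqrt_1. simpl. field. }
  assert (E := PSeries_decr_1 c t (exc t ltac:(rewrite Rabs_pos_eq; lra))).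
  rewrite B_closed in E by lra. rewrite c0 in E.
  change (PS_decr_1 c) with (fun n => c (S n)) in E.
  set (D := PSeries (fun n => c (S n)) t) in *. set (s := sqrt (1 - t)) in *.
  assert (E2 : t * D * s = 1 - s).
  { assert (E1 : t * D = / s - 1) by lra. rewrite E1. field. lra. }
  assert (E3 : t * (D * (s * (1 + s))) = t * 1).
  { replace t with (1 - s * s) at 2 by lra. nra. }
  apply Rmult_eq_reg_l in E3; auto.
  apply (Rmult_eq_reg_r (s * (1 + s))). rewrite E3. field. lra. nra.
Qed.

Lemma k3_closed y : 0 <= y < 1 -> PSeries k3 y = 2 * ln 2 - 2 * ln (1 + sqrt (1 - y)).
Proof.
  apply (ident k3 (fun t => 2 * ln 2 - 2 * ln (1 + sqrt (1 - t)))
               (fun t => / (sqrt (1 - t) * (1 + sqrt (1 - t))))).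
  - intros n. rewrite Rabs_pos_eq. apply k3_le1. apply k3_pos.
  - intros t Ht.
    assert (0 < sqrt (1 - t)) by (apply sqrt_lt_R0; lra).
    auto_derive; replace (1 + - t) with (1 - t) by ring.
    repeat split; try lra. field. lra.
  - intros t Ht. rewrite <- D3 by lra. apply PSeries_ext. intros n.
    unfold PS_derive, k3. rewrite S_INR. field. assert (H1 := pos_INR n). lra.
  - simpl. rewrite Rminus_0_r, sqrt_1. replace (1 + 1) with 2 by ring. ring.
Qed.

Lemma ln_1p_lt d : 0 < d -> ln (1 + d) < d.
Proof.
  intros Hd. rewrite <- (ln_exp d) at 2. apply ln_increasing. lra.
  apply exp_ineq1. lra.
Qed.

Lemma S3 : is_series (fun n => c (S n) / (INR n + 1)) (2 * ln 2).
Proof.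
  assert (Hln2 : 0 < ln 2) by (rewrite <- ln_1; apply ln_increasing; lra).
  assert (H : is_series k3 (2 * ln 2)).
  { apply abel_pos. apply k3_pos. apply k3_le1.
    - intros y Hy. rewrite k3_closed by lra.
      assert (0 <= sqrt (1 - y)) by apply sqrt_pos.
      assert (sqrt (1 - y) * sqrt (1 - y) = 1 - y) by (apply sqrt_sqrt; lra).
      assert (sqrt (1 - y) <= 1) by nra.
      assert (0 <= ln (1 + sqrt (1 - y))) by (rewrite <- ln_1; apply ln_le; lra).
      assert (ln (1 + sqrt (1 - y)) <= ln 2) by (apply ln_le; lra).
      nra.
    - intros eps Heps. set (d := Rmin (1/2) (eps / 4)).
      assert (Hd0 : 0 < d) by (apply Rmin_glb_lt; lra).
      assert (Hd1 : d <= 1/2) by apply Rmin_l. assert (Hd2 : d <= eps / 4) by apply Rmin_r.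
      exists (1 - d * d). split. nra.
      rewrite k3_closed by nra. replace (1 - (1 - d * d)) with (d * d) by ring.
      rewrite sqrt_square by lra. assert (H := ln_1p_lt d Hd0). lra. }
  assert (H2 : is_series (fun k => k3 (S k)) (2 * ln 2)).
  { apply is_series_incr_1. unfold plus; simpl. rewrite Rplus_0_r. exact H. }
  apply (is_series_ext _ _ _ (fun n => eq_refl) H2).
Qed.

Definition e (n : nat) : R := c n / (2 * INR n + 1).

Lemma e_pos n : 0 <= e n.
Proof.
  unfold e. assert (H := c_pos n). assert (H1 := pos_INR n).
  apply Rlt_le, Rdiv_lt_0_compat; lra.
Qed.

Lemma e_le1 n : e n <= 1.
Proof.
  unfold e. assert (H := c_le1 n). assert (H0 := c_pos n). assert (H1 := pos_INR n).
  apply Rmult_le_reg_r with (2 * INR n + 1). lra.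
  unfold Rdiv. rewrite Rmult_assoc, Rinv_l by lra. nra.
Qed.

Lemma e_abs n : Rabs (e n) <= 1.
Proof. rewrite Rabs_pos_eq. apply e_le1. apply e_pos. Qed.

Lemma e_ode y : Rabs y < 1 ->
  PSeries e y + 2 * (y * PSeries (PS_derive e) y) = PSeries c y.
Proof.
  intros Hy.
  assert (Hr := radius_ge e e_abs y Hy).
  assert (ex1 : ex_pseries e y) by (apply CV_radius_inside; auto).
  assert (ex2 : ex_pseries (PS_derive e) y)
    by (apply CV_radius_inside; rewrite CV_radius_derive; auto).
  rewrite <- PSeries_incr_1, <- PSeries_scal, <- PSeries_plus.
  2: exact ex1.
  2: { apply ex_pseries_scal. intros; apply Rmult_comm. apply ex_pseries_incr_1. exact ex2. }
  apply PSeries_ext. intros n.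
  unfold PS_plus, PS_scal, PS_derive, PS_incr_1.
  destruct n.
  - unfold e. unfold scal, plus, zero; simpl. unfold mult, plus, zero; simpl. field.
  - unfold e. rewrite !S_INR. assert (H:= pos_INR n). set (m := INR n) in *.
    unfold scal, plus, zero; simpl. unfold mult, plus, zero; simpl.
    field. lra.
Qed.

Lemma asin_deriv t : -1 < t < 1 -> is_derive asin t (/ sqrt (1 - t ^ 2)).
Proof.
  intros Ht. apply is_derive_Reals.
  apply (derive_pt_eq_1 asin t _ (derivable_pt_asin t Ht)).
  rewrite derive_pt_asin. unfold Rsqr. simpl. rewrite Rmult_1_r. field.
  apply Rgt_not_eq, sqrt_lt_R0. nra.
Qed.

Lemma asin_series x : 0 <= x < 1 -> x * PSeries e (x ^ 2) = asin x.
Proof.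
  intros Hx. apply Rminus_diag_uniq.
  destruct (Req_dec x 0) as [->|Hx0].
  { rewrite asin_0. ring. }
  set (g := fun t => t * PSeries e (t ^ 2) - asin t).
  change (g x = 0).
  rewrite (zero_derive_const g x); [unfold g; rewrite asin_0; ring|lra|].
  intros t Ht.
  assert (Ht2 : Rabs (t ^ 2) < 1) by (rewrite Rabs_pos_eq; nra).
  assert (Dsq : is_derive (fun t : R => t ^ 2) t (2 * t)).
  { auto_derive. auto. simpl. ring. }
  assert (Dc := is_derive_comp (PSeries e) (fun t : R => t ^ 2) t _ _
                 (is_derive_PSeries e (t ^ 2) (radius_ge e e_abs _ Ht2)) Dsq).
  assert (Did : is_derive (fun t : R => t) t 1) by (auto_derive; auto).
  assert (Dm := is_derive_mult (fun t : R => t) (fun t => PSeries e (t ^ 2)) t _ _ Did Dc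
                  (fun a b => Rmult_comm a b)).
  assert (D := is_derive_minus _ _ t _ _ Dm (asin_deriv t ltac:(lra))).
  unfold g.
  match type of D with is_derive _ _ ?v => replace 0 with v end.
  exact D.
  unfold minus, plus, opp, mult, scal; simpl. unfold mult; simpl.
  replace (t * (t * 1)) with (t ^ 2) by ring.
  assert (E := e_ode _ Ht2). rewrite B_closed in E by nra.
  set (P := PSeries e (t ^ 2)) in *. set (P' := PSeries (PS_derive e) (t ^ 2)) in *.
  rewrite <- E. ring.
Qed.

Lemma S1 : is_series e (PI / 2).
Proof.
  apply abel_pos. apply e_pos. apply e_le1.
  - intros y Hy. set (x := sqrt y).
    assert (Hx0 : 0 <= x) by apply sqrt_pos.
    assert (Hxx : x * x = y) by (apply sqrt_sqrt; lra).
    assert (Hx1 : x < 1) by nra.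
    assert (Hx2 : x ^ 2 = y) by (simpl; lra).
    assert (A := asin_series x ltac:(lra)). rewrite Hx2 in A.
    assert (E : y * PSeries e y = x * asin x) by (rewrite <- A, <- Rmult_assoc, Hxx; reflexivity).
    rewrite E.
    assert (B := asin_bound x). assert (HP := PI_RGT_0). nra.
  - intros eps Heps. set (d := Rmin (eps / 2) 1).
    assert (Hd0 : 0 < d) by (apply Rmin_glb_lt; lra).
    assert (Hd1 : d <= 1) by apply Rmin_r. assert (Hd2 : d <= eps / 2) by apply Rmin_l.
    assert (HP := PI2_1).
    set (x := sin (PI / 2 - d)).
    assert (Ha : asin x = PI / 2 - d) by (apply asin_sin; lra).
    assert (Hxpos : 0 < x) by (apply sin_gt_0; lra).
    assert (Hxle : x <= 1) by apply SIN_bound.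
    assert (Hxne : x <> 1) by (intros E; rewrite E, asin_1 in Ha; lra).
    exists (x ^ 2). split. simpl. nra. simpl. 
    assert (A := asin_series x ltac:(lra)). rewrite Ha in A. simpl in A.
    set (P := PSeries e (x * (x * 1))) in *.
    nra.
Qed.

Lemma term7_eq n : term7 n = 4 * e n - 4 * (c n / (INR n + 1)) + 2 * (c (S n) / (INR n + 1)).
Proof.
  unfold term7. rewrite cS. unfold e, c.
  assert (H := pos_INR n).
  assert (H3 : 2 ^ (2 * n) <> 0) by (apply pow_nonzero; lra).
  field. repeat split; lra.
Qed.

Theorem mainTheorem7 :
  is_series term7 (2 * PI + 4 * ln 2 - 8).
Proof.
  assert (H := is_series_plus _ _ _ _
                 (is_series_minus _ _ _ _ (is_series_scal 4 _ _ S1) (is_series_scal 4 _ _ S2))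
                 (is_series_scal 2 _ _ S3)).
  assert (E : plus (plus (scal 4 (PI / 2)) (opp (scal 4 2))) (scal 2 (2 * ln 2))
              = 2 * PI + 4 * ln 2 - 8).
  { unfold plus, opp, scal; simpl. unfold mult; simpl. field. }
  rewrite <- E.
  eapply is_series_ext; [|exact H].
  intros n. rewrite term7_eq. unfold plus, opp, scal; simpl. unfold mult; simpl. ring.
Qed.
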